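(* For every positive integer $r$ there exist an integer $K_r\le 3^r$, elements $a_1,\dots,a_{K_r}\in\mathbf{D}_3$, and a map $\pi:\{1,\dots,K_r\}\to\{1,\dots,r\}$ such that for every $y\in\{0,1\}^r$, $$a_1^{y_{\pi(1)}}a_2^{y_{\pi(2)}}\cdots a_{K_r}^{y_{\pi(K_r)}}\neq 1\iff y_1=y_2=\dots=y_r=1.$$ Equivalently, the linear equation $C(x_1,\dots,x_{K_r})=a_1^{x_1}\cdots a_{K_r}^{x_{K_r}}$ over $\mathbf{D}_3$ satisfies $\mathbf 1[C(y_{\pi(1)},\dots,y_{\pi(K_r)})\ne1]=\mathbf{AND}_r(y_1,\dots,y_r)$.
   Context: $\mathbf{D}_3$ denotes the dihedral group of order 6; $1$ denotes its identity and $a^0=1$, $a^1=a$. A linear equation over a group $G$ on variables $x_1,\dots,x_K\in\{0,1\}$ is a map of the form $C(x)=a_1^{x_1}\cdots a_K^{x_K}$ with $a_i\in G$, the product taken in the given order. $\mathbf{AND}_r(y)=1$ iff all $y_i=1$, and $0$ otherwise. *)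

(* Defs.v *)
From mathcomp Require Import all_boot all_fingroup.
Set Implicit Arguments. Unset Strict Implicit. Unset Printing Implicit Defensive.
Local Open Scope group_scope.

(* The dihedral group D_3 of order 6: the symmetry group of an (equilateral)
   triangle, acting faithfully on its 3 vertices; every permutation of the
   3 vertices is a symmetry, so D_3 is realised as {perm 'I_3}. *)
Notation D3 := {perm 'I_3}.

Definition bpow (a : D3) (x : bool) : D3 := if x then a else 1.

Definition lin_eq (K : nat) (a : 'I_K -> D3) (x : 'I_K -> bool) : D3 :=
  \prod_(i < K) bpow (a i) (x i).

Definition ANDr (r : nat) (y : 'I_r -> bool) : bool := [forall i, y i].

(* Main.v *)
Require Import Defs.
From mathcomp Require Import all_boot all_fingroup.
From mathcomp Require Import zify.
Local Open Scope group_scope.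
Definition o0 : 'I_3 := @Ordinal 3 0 isT.
Definition o1 : 'I_3 := @Ordinal 3 1 isT.
Definition o2 : 'I_3 := @Ordinal 3 2 isT.
Definition s : D3 := tperm o0 o1.
Definition z : D3 := tperm o0 o1 * tperm o1 o2.
Lemma zs : s * z * s * z^-1 = z.
Proof.
apply/permP => i; rewrite /s /z !permM !invMg !permM !tpermV.
case: i => [[|[|[|]]]] // ?; rewrite !permE /=; apply/val_inj => //=.
Qed.
Lemma ss : s * s = 1.
Proof. by rewrite /s tperm2. Qed.
Lemma z1 : z != 1.
Proof. apply/eqP => /permP /(_ o0). rewrite /z permM !permE /=. done. Qed.

Section P.
Variable n : nat.
Local Notation r := n.+1.
Definition ev (y : 'I_r -> bool) (p : seq (D3 * 'I_r)) : D3 :=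
  \prod_(q <- p) bpow q.1 (y q.2).
Definition invp (p : seq (D3 * 'I_r)) := rev (map (fun q => (q.1^-1, q.2)) p).

Lemma ev_cat y p q : ev y (p ++ q) = ev y p * ev y q.
Proof. by rewrite /ev big_cat. Qed.
Lemma ev_cons y a p : ev y (a :: p) = bpow a.1 (y a.2) * ev y p.
Proof. by rewrite /ev big_cons. Qed.
Lemma ev_inv y p : ev y (invp p) = (ev y p)^-1.
Proof.
elim: p => [|a p IH]; first by rewrite /ev /invp /= !big_nil invg1.
rewrite /invp /= rev_cons -cats1 ev_cat -/(invp p) IH ev_cons /ev big_seq1 invMg.
by rewrite /bpow; case: (y a.2); rewrite ?invg1.
Qed.

Fixpoint prog (k : nat) : seq (D3 * 'I_r) :=
  if k is k'.+1 then
    let v := inord k in (s, v) :: prog k' ++ (s, v) :: invp (prog k')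
  else [:: (z, inord 0)].

Lemma size_prog k : (size (prog k) <= 3 ^ k.+1)%N.
Proof.
elim: k => [|k IH] //=.
rewrite size_cat /= /invp size_rev size_map.
have : (3 <= 3 ^ k.+1)%N by rewrite expnS leq_pmulr // expn_gt0.
rewrite (expnS 3 k.+1); move: IH; set x := (3 ^ k.+1)%N; set m := size _.
move=> IH Hx; rewrite addnS /=; lia.
Qed.

Lemma ev_prog y k : k < r ->
  ev y (prog k) = if [forall i : 'I_r, (i <= k)%N ==> y i] then z else 1.
Proof.
elim: k => [|k IH] Hk.
  rewrite /= ev_cons /ev big_nil mulg1.
  have -> : [forall i : 'I_r, (i <= 0)%N ==> y i] = y (inord 0).
    apply/forallP/idP => [H|H i]; first by have := H (inord 0); rewrite inordK.
    apply/implyP; rewrite leqn0 => /eqP i0.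
    by have -> : i = inord 0 by apply/val_inj; rewrite /= inordK.
  by rewrite /bpow; case: (y _).
have -> : [forall i : 'I_r, (i <= k.+1)%N ==> y i] =
   [forall i : 'I_r, (i <= k)%N ==> y i] && y (inord k.+1).
  apply/forallP/andP => [H|[/forallP H1 H2] i].
    split; last by have := H (inord k.+1); rewrite inordK ?leqnn.
    by apply/forallP => i; apply/implyP => Hi; apply: (implyP (H i)); lia.
  apply/implyP; rewrite leq_eqVlt ltnS => /orP [/eqP iE|Hi].
    by have -> : i = inord k.+1 by apply/val_inj; rewrite /= inordK.
  exact: (implyP (H1 i)).
rewrite /= ev_cons ev_cat ev_cons ev_inv IH; last by lia.
rewrite /=.
case: (y (inord k.+1)); case: [forall _, _] => /=;
  rewrite /bpow ?mulg1 ?mul1g ?invg1 ?mulgV ?ss //.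
- by move: zs; rewrite !mulgA.
- by rewrite mulg1 ss.
Qed.
End P.

Local Close Scope group_scope.

Theorem mainTheorem11 :
  forall r : nat, 0 < r ->
  exists (K : nat) (a : 'I_K -> D3) (pi : 'I_K -> 'I_r),
    K <= 3 ^ r /\
    forall y : 'I_r -> bool,
      (lin_eq a (fun i => y (pi i)) != 1%g) = ANDr y.
Proof.
case=> [//|n] r0.
set p := prog n n.
have x0 : D3 * 'I_n.+1 := (1%g, ord0).
exists (size p), (fun i => (nth x0 p i).1), (fun i => (nth x0 p i).2).
split; first by have := size_prog n n; done.
move=> y.
have -> : lin_eq (fun i : 'I_(size p) => (nth x0 p i).1) (fun i => y (nth x0 p i).2)
   = @ev n y p.
  by rewrite /lin_eq /ev (big_nth x0) big_mkord.
rewrite /p ev_prog; last by done.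
have -> : [forall i : 'I_n.+1, (i <= n)%N ==> y i] = ANDr y.
  rewrite /ANDr; apply/forallP/forallP => H i; last by rewrite H implybT.
  by apply: (implyP (H i)); have := ltn_ord i; lia.
by case: (ANDr y); rewrite ?z1 ?eqxx.
Qed.
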